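(* Let $k\ge 3$ be odd and let $G$ be the $k$-uniform sunflower, with Laplacian tensor $\mathcal L$. Then $\lambda(\mathcal L)=2$.
   Context: A $k$-uniform hypergraph $G=(V,E)$ has vertex set $V=[n]$ and a nonempty set $E$ of $k$-element subsets of $V$; $d_i$ is the number of edges containing $i$. The $k$-uniform sunflower has vertex set $\{i_{j,s}: j\in[k-1], s\in[k]\}\cup\{i_k\}$ (all distinct) and edges $\{i_{j,1},\ldots,i_{j,k}\}$ for $j\in[k-1]$ together with $\{i_{1,1},\ldots,i_{k-1,1},i_k\}$. The Laplacian tensor $\mathcal L$ of $G$ acts by $(\mathcal L\mathbf x^{k-1})_i=d_ix_i^{k-1}-\sum_{e\in E,\,i\in e}\prod_{s\in e\setminus\{i\}}x_s$ (it is $\mathcal D-\mathcal A$ with $\mathcal D$ the diagonal degree tensor and $\mathcal A$ the adjacency tensor with entries $\frac1{(k-1)!}$ on edges). A real $\lambda$ is an H-eigenvalue of $\mathcal L$ if some nonzero $\mathbf x\in\mathbb R^n$ satisfies $(\mathcal L\mathbf x^{k-1})_i=\lambda x_i^{k-1}$ for all $i$; $\lambda(\mathcal L)$ is the largest H-eigenvalue. *)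

(* Defs.v *)
From HB Require Import structures.
From mathcomp Require Import all_boot all_order all_algebra.
From mathcomp Require Import reals.
Set Implicit Arguments. Unset Strict Implicit. Unset Printing Implicit Defensive.
Import Order.TTheory GRing.Theory Num.Theory.
Local Open Scope ring_scope.

Definition hdeg (V : finType) (E : {set {set V}}) (i : V) : nat :=
  #|[set e in E | i \in e]|.

(* (L x^{k-1})_i = d_i x_i^{k-1} - sum_{e in E, i in e} prod_{s in e \ {i}} x_s *)
Definition lap_apply (R : comPzRingType) (V : finType) (E : {set {set V}})
    (k : nat) (x : V -> R) (i : V) : R :=
  (hdeg E i)%:R * x i ^+ (k - 1) - \sum_(e in E | i \in e) \prod_(s in e :\ i) x s.

Definition is_H_eigenvalue (R : realType) (V : finType) (E : {set {set V}})
    (k : nat) (lam : R) : Prop :=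
  exists x : V -> R, (exists i, x i != 0) /\
    forall i, lap_apply E k x i = lam * x i ^+ (k - 1).

Definition is_largest_H_eigenvalue (R : realType) (V : finType)
    (E : {set {set V}}) (k : nat) (lam : R) : Prop :=
  is_H_eigenvalue E k lam /\ forall mu : R, is_H_eigenvalue E k mu -> mu <= lam.

(* k-uniform sunflower: vertices i_{j,s} = Some (j,s) (j in [k-1], s in [k])
   and the center i_k = None. *)
Definition sunflower_V (k : nat) : finType := option ('I_(k.-1) * 'I_k).

Definition petal (k : nat) (j : 'I_(k.-1)) : {set sunflower_V k} :=
  [set Some (j, s) | s : 'I_k].

Definition center_edge (k : nat) : {set sunflower_V k} :=
  None |: [set Some p | p in [pred p : 'I_(k.-1) * 'I_k | val p.2 == 0%N]].

Definition sunflower (k : nat) : {set {set sunflower_V k}} :=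
  center_edge k |: [set petal j | j : 'I_(k.-1)].

(* Main.v *)
Require Import Defs.
From HB Require Import structures.
From mathcomp Require Import all_boot all_order all_algebra.
From mathcomp Require Import reals ring lra.
Import Order.TTheory GRing.Theory Num.Theory.
Local Open Scope ring_scope.

Section S.
Variable n : nat.
Local Notation k := n.+3.
Local Notation VV := (sunflower_V k).

Lemma mem_petal (j : 'I_(n.+2)) (v : VV) :
  (v \in @petal k j) = if v is Some p then p.1 == j else false.
Proof.
apply/imsetP; case: v => [[j' s]|] /=.
- case: eqP => [->|ne]; first by exists s.
  by case=> s' _ [].
- by case.
Qed.

Lemma mem_center (v : VV) :
  (v \in center_edge k) = if v is Some p then val p.2 == 0%N else true.
Proof.
rewrite /center_edge in_setU1; case: v => [p|] //=.
apply/imsetP; case: ifP => h.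
- by exists p.
- by case=> q; rewrite inE => hq [] e; rewrite e hq in h.
Qed.

Lemma petal_inj : injective (@petal k).
Proof.
move=> j1 j2 e.
have : Some (j1, ord0) \in @petal k j2 by rewrite -e mem_petal.
by rewrite mem_petal /= => /eqP.
Qed.

Lemma center_notin : center_edge k \notin [set @petal k j | j : 'I_(n.+2)].
Proof.
apply/imsetP => -[j _ e].
have : None \in @petal k j by rewrite -e mem_center.
by rewrite mem_petal.
Qed.

Lemma decomp (R : comPzRingType) (F : {set VV} -> R) (v : VV) :
  \sum_(e in sunflower k | v \in e) F e =
  (if v \in center_edge k then F (center_edge k) else 0) +
  \sum_(j : 'I_(n.+2)) (if v \in @petal k j then F (@petal k j) else 0).
Proof.
rewrite big_mkcondr /sunflower big_setU1 ?center_notin //= big_imset //.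
by move=> j1 j2 _ _; apply: petal_inj.
Qed.

Lemma sum_if_eq (R : comPzRingType) (G : 'I_(n.+2) -> R) j :
  \sum_j' (if j == j' then G j' else 0) = G j.
Proof.
rewrite (bigD1 j) //= eqxx big1 ?addr0 // => i /negPf; by rewrite eq_sym => ->.
Qed.

Lemma sum_petal_None (R : comPzRingType) (F : {set VV} -> R) :
  \sum_(j : 'I_(n.+2)) (if None \in @petal k j then F (@petal k j) else 0) = 0.
Proof. by apply: big1 => j _; rewrite mem_petal. Qed.

Lemma sum_petal_Some (R : comPzRingType) (F : {set VV} -> R) j s :
  \sum_(j' : 'I_(n.+2)) (if Some (j, s) \in @petal k j' then F (@petal k j') else 0) = F (@petal k j).
Proof.
rewrite (eq_bigr (fun j' => if j == j' then F (@petal k j') else 0)) ?sum_if_eq //.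
by move=> j' _; rewrite mem_petal.
Qed.

Lemma eqs_of (R : comPzRingType) (x : VV -> R) lam :
  (forall v, \sum_(e in sunflower k | v \in e) (x v ^+ k - \prod_(s in e) x s) = lam * x v ^+ k) ->
  [/\ x None ^+ k - \prod_(s in center_edge k) x s = lam * x None ^+ k,
   forall j : 'I_(n.+2), (x (Some (j, ord0)) ^+ k - \prod_(s in center_edge k) x s)
     + (x (Some (j, ord0)) ^+ k - \prod_(s in @petal k j) x s) = lam * x (Some (j, ord0)) ^+ k &
   forall j s : 'I_(n.+2), x (Some (j, lift ord0 s)) ^+ k - \prod_(s in @petal k j) x s
     = lam * x (Some (j, lift ord0 s)) ^+ k].
Proof.
move=> he; split.
- move: (he None); rewrite decomp.
  by rewrite (sum_petal_None _ (fun e => x None ^+ k - \prod_(s in e) x s)) addr0 mem_center.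
- move=> j; move: (he (Some (j, ord0))); rewrite decomp mem_center.
  by rewrite (sum_petal_Some _ (fun e => x (Some (j, ord0)) ^+ k - \prod_(s in e) x s)).
- move=> j s; move: (he (Some (j, lift ord0 s))); rewrite decomp mem_center.
  rewrite (sum_petal_Some _ (fun e => x (Some (j, lift ord0 s)) ^+ k - \prod_(s in e) x s)).
  by move=> h; rewrite -h /= add0r.
Qed.

Lemma prod_petal (R : comPzRingType) (x : VV -> R) j :
  \prod_(s in @petal k j) x s =
  x (Some (j, ord0)) * \prod_(s : 'I_(n.+2)) x (Some (j, lift ord0 s)).
Proof.
rewrite big_imset /=; last by move=> s1 s2 _ _ [].
by rewrite big_ord_recl.
Qed.

Lemma prod_center (R : comPzRingType) (x : VV -> R) :
  \prod_(s in center_edge k) x s =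
  x None * \prod_(j : 'I_(n.+2)) x (Some (j, ord0)).
Proof.
rewrite /center_edge big_setU1 /=; last first.
  by apply/imsetP => -[].
congr (_ * _); rewrite big_imset /=; last by move=> p1 p2 _ _ [].
rewrite (eq_bigl (fun p : 'I_(n.+2) * 'I_k => xpredT p.1 && (val p.2 == 0%N))); last by move=> p; rewrite inE.
rewrite (eq_bigr (fun p : 'I_(n.+2) * 'I_k => (fun j s => x (Some (j, s))) p.1 p.2)); last by case.
rewrite -(pair_big_dep xpredT (fun _ (s : 'I_k) => val s == 0%N) (fun j s => x (Some (j, s)))).
apply: eq_bigr => j _.
rewrite (eq_bigl (fun s => s == ord0)) ?big_pred1_eq //.
Qed.
End S.
Lemma prod_even_neg (R : realDomainType) (n : nat) (f : 'I_(n.+2) -> R) :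
  ~~ odd n -> (forall j, f j < 0) -> 0 < \prod_j f j.
Proof.
move=> en fn.
have -> : \prod_j f j = \prod_j (- (- f j)) by apply: eq_bigr => j _; rewrite opprK.
rewrite prodrN card_ord -signr_odd /= (negPf en) expr0 mul1r.
by apply: prodr_gt0 => j _; rewrite oppr_gt0.
Qed.

Lemma prod_pos (R : realDomainType) (n : nat) (f : 'I_n -> R) :
  (forall j, 0 < f j) -> 0 < \prod_j f j.
Proof. by move=> h; apply: prodr_gt0 => j _. Qed.

Lemma keyZ (R : realDomainType) n (lam c Z : R) (a P : 'I_(n.+2) -> R)
  (y : 'I_(n.+2) -> 'I_(n.+2) -> R) :
 ~~ odd n -> 2 < lam ->
 c^+(n.+3) - Z = lam * c^+(n.+3) ->
 (forall j, (a j^+(n.+3) - Z) + (a j ^+(n.+3) - P j) = lam * a j^+(n.+3)) ->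
 (forall j s, y j s ^+ (n.+3) - P j = lam * y j s ^+(n.+3)) ->
 (forall j, P j = a j * \prod_s y j s) ->
 Z = c * \prod_j a j ->
 Z <= 0.
Proof.
move=> en hl hc ha hy hP hZ; rewrite leNgt; apply/negP => Zp.
have on3 : odd n.+3 by rewrite /= negbK.
have cn : c < 0.
  rewrite -(exprn_odd_lt0 _ on3).
  have : (1 - lam) * c ^+ n.+3 = Z by rewrite mulrBl mul1r -hc; ring.
  move=> e; rewrite ltNge; apply/negP => c0.
  have : Z <= 0 by rewrite -e; apply: mulr_le0_ge0 => //; rewrite subr_le0; apply: ltW; apply: lt_trans hl; rewrite ltr1n.
  by rewrite leNgt Zp.
have an : forall j, a j < 0.
  move=> j; rewrite ltNge; apply/negP => a0.
  have ak : 0 <= a j ^+ n.+3 by rewrite exprn_odd_ge0.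
  have e : (2 - lam) * a j ^+ n.+3 = Z + P j by rewrite mulrBl -(ha j); ring.
  have Pn : P j < 0.
    have : (2 - lam) * a j ^+ n.+3 <= 0 by apply: mulr_le0_ge0 => //; rewrite subr_le0 ltW.
    rewrite e => h; rewrite -(ltrD2l Z) addr0; apply: le_lt_trans h _; exact Zp.
  have yp : forall s, 0 < y j s.
    move=> s; rewrite -(exprn_odd_gt0 _ on3).
    have e2 : (1 - lam) * y j s ^+ n.+3 = P j by rewrite mulrBl mul1r -(hy j s); ring.
    rewrite ltNge; apply/negP => y0.
    have : 0 <= P j.
      rewrite -e2; apply: mulr_le0 => //; rewrite subr_le0; apply: ltW; apply: lt_trans hl; by rewrite ltr1n.
    by rewrite leNgt Pn.
  have : 0 <= P j by rewrite hP; apply: mulr_ge0 => //; apply: ltW; apply: prod_pos.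
  by rewrite leNgt Pn.
have : Z < 0 by rewrite hZ nmulr_rlt0 //; apply: prod_even_neg.
by rewrite ltNge (ltW Zp).
Qed.

Lemma prodN_even (R : realDomainType) (n : nat) (f : 'I_(n.+2) -> R) :
  ~~ odd n -> \prod_j (- f j) = \prod_j f j.
Proof. by move=> en; rewrite prodrN card_ord -signr_odd /= (negPf en) expr0 mul1r. Qed.

Lemma exprN_odd (R : realDomainType) (n : nat) (x : R) :
  ~~ odd n -> (- x) ^+ n.+3 = - x ^+ n.+3.
Proof. by move=> en; rewrite exprNn -signr_odd /= negbK en expr1 mulN1r. Qed.

Lemma keyP (R : realDomainType) n (lam p a : R) (y : 'I_(n.+2) -> R) :
 ~~ odd n -> 2 < lam ->
 (a^+(n.+3) - 0) + (a ^+(n.+3) - p) = lam * a^+(n.+3) ->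
 (forall s, y s ^+ (n.+3) - p = lam * y s ^+(n.+3)) ->
 p = a * \prod_s y s -> 0 < p -> False.
Proof.
move=> en hl ha hy hP pp.
have on3 : odd n.+3 by rewrite /= negbK.
have an : a < 0.
  rewrite -(exprn_odd_lt0 _ on3).
  have e : (2 - lam) * a ^+ n.+3 = p by rewrite mulrBl -ha; ring.
  rewrite ltNge; apply/negP => a0.
  have : p <= 0 by rewrite -e; apply: mulr_le0_ge0 => //; rewrite subr_le0 ltW.
  by rewrite leNgt pp.
have yn : forall s, y s < 0.
  move=> s; rewrite -(exprn_odd_lt0 _ on3).
  have e2 : (1 - lam) * y s ^+ n.+3 = p by rewrite mulrBl mul1r -(hy s); ring.
  rewrite ltNge; apply/negP => y0.
  have : p <= 0.
    rewrite -e2; apply: mulr_le0_ge0 => //; rewrite subr_le0; apply: ltW; apply: lt_trans hl; by rewrite ltr1n.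
  by rewrite leNgt pp.
have : p < 0 by rewrite hP nmulr_rlt0 //; apply: prod_even_neg.
by rewrite ltNge (ltW pp).
Qed.

Lemma all_zero (R : realDomainType) n (lam c Z : R) (a P : 'I_(n.+2) -> R)
  (y : 'I_(n.+2) -> 'I_(n.+2) -> R) :
 ~~ odd n -> 2 < lam ->
 c^+(n.+3) - Z = lam * c^+(n.+3) ->
 (forall j, (a j^+(n.+3) - Z) + (a j ^+(n.+3) - P j) = lam * a j^+(n.+3)) ->
 (forall j s, y j s ^+ (n.+3) - P j = lam * y j s ^+(n.+3)) ->
 (forall j, P j = a j * \prod_s y j s) ->
 Z = c * \prod_j a j ->
 [/\ c = 0, forall j, a j = 0 & forall j s, y j s = 0].
Proof.
move=> en hl hc ha hy hP hZ.
have Z1 := @keyZ R n lam c Z a P y en hl hc ha hy hP hZ.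
have Z2 : - Z <= 0.
  apply: (@keyZ R n lam (- c) (- Z) (fun j => - a j) (fun j => - P j) (fun j s => - y j s) en hl).
  - by rewrite exprN_odd // mulrN -hc; ring.
  - by move=> j; rewrite exprN_odd // mulrN -(ha j); ring.
  - by move=> j s; rewrite exprN_odd // mulrN -(hy j s); ring.
  - by move=> j; rewrite hP prodN_even // mulNr.
  - by rewrite prodN_even // hZ mulNr.
have Z0 : Z = 0 by apply/eqP; rewrite eq_le Z1 -oppr_le0 Z2.
have l1 : lam - 1 != 0 by rewrite subr_eq0 gt_eqF //; apply: lt_trans hl; rewrite ltr1n.
have l2 : lam - 2 != 0 by rewrite subr_eq0 gt_eqF.
have P0 : forall j, P j = 0.
  move=> j; have : forall s, y j s ^+ (n.+3) - P j = lam * y j s ^+(n.+3) by move=> s; exact: hy.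
  move: (ha j) (hP j); rewrite Z0 => haj hPj hyj.
  case: (ltgtP (P j) 0) => // h.
  - exfalso; apply: (@keyP R n lam (- P j) (- a j) (fun s => - y j s) en hl).
    + by rewrite exprN_odd // mulrN -haj; ring.
    + by move=> s; rewrite exprN_odd // mulrN -hyj; ring.
    + by rewrite hPj prodN_even // mulNr.
    + by rewrite oppr_gt0.
  - exfalso; exact: (@keyP R n lam (P j) (a j) (y j) en hl haj hyj hPj h).
have pw : forall t : R, t ^+ n.+3 = 0 -> t = 0 by move=> t /eqP; rewrite expf_eq0 /= => /eqP.
split.
- apply: pw; have e : (lam - 1) * c ^+ n.+3 = 0 by rewrite mulrBl mul1r -hc Z0; ring.
  by move/eqP: e; rewrite mulf_eq0 (negPf l1) /= => /eqP.
- move=> j; apply: pw; have e : (lam - 2) * a j ^+ n.+3 = 0.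
    by rewrite mulrBl -(ha j) Z0 P0; ring.
  by move/eqP: e; rewrite mulf_eq0 (negPf l2) /= => /eqP.
- move=> j s; apply: pw; have e : (lam - 1) * y j s ^+ n.+3 = 0.
    by rewrite mulrBl mul1r -(hy j s) P0; ring.
  by move/eqP: e; rewrite mulf_eq0 (negPf l1) /= => /eqP.
Qed.
Lemma eqn_mul (R : comPzRingType) (V : finType) (E : {set {set V}}) k (x : V -> R) lam v :
  (0 < k)%N -> lap_apply E k x v = lam * x v ^+ (k - 1) ->
  \sum_(e in E | v \in e) (x v ^+ k - \prod_(s in e) x s) = lam * x v ^+ k.
Proof.
move=> k0 h.
have ek : x v ^+ k = x v * x v ^+ (k - 1) by rewrite -exprS subn1 prednK.
rewrite sumrB.
have -> : \sum_(e in E | v \in e) x v ^+ k = (hdeg E v)%:R * x v ^+ k.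
  rewrite /hdeg -sumr_const mulr_suml; apply: eq_big => [e|e _]; by rewrite ?inE ?mul1r.
have -> : \sum_(e in E | v \in e) \prod_(s in e) x s =
   x v * \sum_(e in E | v \in e) \prod_(s in e :\ v) x s.
  rewrite mulr_sumr; apply: eq_bigr => e /andP [_ ve]; by rewrite (big_setD1 _ ve).
rewrite ek; move: h; rewrite /lap_apply => h; transitivity (x v * (lam * x v ^+ (k-1))); [rewrite -h; ring | ring].
Qed.

Lemma some_neq2 a b (j j' : 'I_a) (s s' : 'I_b) :
  val s != val s' -> Some (j, s) != Some (j', s').
Proof. by move=> h; apply/eqP => -[_ e]; rewrite e eqxx in h. Qed.

Lemma some_neq1 a b (j j' : 'I_a) (s s' : 'I_b) :
  val j != val j' -> Some (j, s) != Some (j', s').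
Proof. by move=> h; apply/eqP => -[e _]; rewrite e eqxx in h. Qed.

Lemma hdegR (R : comPzRingType) (V : finType) (E : {set {set V}}) v :
  (hdeg E v)%:R = \sum_(e in E | v \in e) (1 : R).
Proof. rewrite /hdeg -sumr_const; apply: eq_bigl => e; by rewrite inE. Qed.

Theorem proposition3p5 (R : realType) (k : nat) :
  odd k -> (3 <= k)%N -> is_largest_H_eigenvalue (sunflower k) k (2 : R).
Proof.
case: k => [|[|[|n]]] // ok _.
have en : ~~ odd n by move: ok; rewrite /= !negbK.
split.
- pose v0 : sunflower_V n.+3 := Some (ord0, ord0).
  pose x := fun v : sunflower_V n.+3 => if v == v0 then (1 : R) else 0.
  exists x; split; first by exists v0; rewrite /x eqxx oner_eq0.
  move=> i; rewrite /lap_apply.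
  have hz : \sum_(e in sunflower n.+3 | i \in e) \prod_(s in e :\ i) x s = 0.
    apply: big1 => e /andP [eE ie].
    have wz : forall w, w \in e -> w != i -> w != v0 -> \prod_(s in e :\ i) x s = 0.
      move=> w we wi wv; rewrite (big_setD1 w); last by rewrite !inE wi we.
      have -> : x w = 0 by rewrite /x (negPf wv).
      exact: mul0r.
    move: eE; rewrite /sunflower in_setU1 => /orP [/eqP ee | /imsetP [j _ ee]].
    + pose j1 : 'I_(n.+2) := lift ord0 ord0.
      case: (eqVneq i None) => [iN | iN].
      * apply: (wz (Some (j1, ord0))); rewrite ?ee ?mem_center ?iN //.
      * apply: (wz None); by rewrite ?ee ?mem_center // eq_sym.
    + pose s1 : 'I_(n.+3) := lift ord0 ord0.
      pose s2 : 'I_(n.+3) := lift ord0 (lift ord0 ord0).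
      case: (eqVneq i (Some (j, s1))) => [iN | iN].
      * apply: (wz (Some (j, s2))); rewrite ?ee ?mem_petal ?iN //; exact: some_neq2.
      * apply: (wz (Some (j, s1))); rewrite ?ee ?mem_petal 1?eq_sym //; exact: some_neq2.
  rewrite hz subr0; case: (eqVneq i v0) => [-> | iv].
  + have -> : x v0 = 1 by rewrite /x eqxx.
    rewrite expr1n !mulr1 hdegR decomp mem_center /=.
    under eq_bigr => j _ do rewrite mem_petal /=.
    rewrite sum_if_eq; by rewrite -mulr2n.
  + have -> : x i = 0 by rewrite /x (negPf iv).
    by rewrite expr0n /= !mulr0.
- move=> mu [x [[i xi] hx]].
  rewrite leNgt; apply/negP => hl.
  have he := fun v => @eqn_mul R _ (sunflower n.+3) n.+3 x mu v isT (hx v).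
  have [H1 H2 H3] := @eqs_of n _ x mu he.
  have [c0 a0 y0] := @all_zero R n mu (x None) (\prod_(s in center_edge n.+3) x s)
    (fun j => x (Some (j, ord0))) (fun j => \prod_(s in @petal n.+3 j) x s)
    (fun j s => x (Some (j, lift ord0 s))) en hl H1 H2 H3 (fun j => @prod_petal n _ x j) (@prod_center n _ x).
  move: xi; case: i => [[j s]|]; last by rewrite c0 eqxx.
  case: (unliftP ord0 s) => [s' -> | ->]; first by rewrite y0 eqxx.
  by rewrite a0 eqxx.
Qed.
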